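(* Let $k$ be a positive integer and $n_0,\ldots,n_{k-1}$ positive integers, with indices read modulo $k$. For each $j\in\{0,\ldots,k-1\}$ let $A^{(j)}$ be a real $n_j\times n_{j+1}$ matrix, and let $A=A^{(0)}A^{(1)}\cdots A^{(k-1)}$ (an $n_0\times n_0$ matrix). If the signed digraph $G=G_{A^{(0)}\cdots A^{(k-1)}}$ is e-cycle-free, then $A$ is a $P_0$-matrix.
   Context: Indices $j$ are taken modulo $k$ (so $n_k=n_0$ and $A^{(k-1)}$ is $n_{k-1}\times n_0$). The signed digraph $G=G_{A^{(0)}\cdots A^{(k-1)}}$ has vertex set the disjoint union of sets $V_0,\ldots,V_{k-1}$ with $V_j=\{V_j^1,\ldots,V_j^{n_j}\}$; there is a directed edge from $V_j^r$ to $V_{j+1}^s$ if and only if $(A^{(j)})_{rs}\neq 0$, and this edge has sign equal to the sign of $(A^{(j)})_{rs}$; there are no other edges (when $k=1$ this means an edge from $V_0^r$ to $V_0^s$, possibly a loop, iff $(A^{(0)})_{rs}\ne 0$). Every directed cycle in $G$ has length a multiple of $k$. A directed cycle with $kr_1$ edges, of which $r_2$ are negative, is an e-cycle if $(-1)^{r_1+r_2}=1$ and an o-cycle otherwise. $G$ is e-cycle-free if it contains no e-cycle. A $P_0$-matrix is a real square matrix all of whose principal minors are nonnegative. *)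

(* Defs.v *)
From HB Require Import structures.
From mathcomp Require Import all_boot all_order all_algebra.
Set Implicit Arguments. Unset Strict Implicit. Unset Printing Implicit Defensive.
Import Order.TTheory GRing.Theory Num.Theory.
Local Open Scope ring_scope.

(* The dimensions are given as n : nat -> nat; only n 0, ..., n (k-1) matter,
   and the convention "indices mod k" is imposed by the hypothesis n k = n 0.
   The matrices are A j : 'M_(n j, n j.+1) for j < k (A j for j >= k is unused). *)

Fixpoint chain_prod (R : pzRingType) (n : nat -> nat)
    (A : forall j : nat, 'M[R]_(n j, n j.+1)) (m : nat) : 'M[R]_(n 0%N, n m) :=
  match m with
  | 0 => 1%:M
  | m'.+1 => chain_prod A m' *m A m'
  end.

Definition cyc_prod (R : pzRingType) (k : nat) (n : nat -> nat)
    (A : forall j : nat, 'M[R]_(n j, n j.+1)) (hk : n k = n 0%N) : 'M[R]_(n 0%N) :=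
  castmx (erefl, hk) (chain_prod A k).

(* Entry (A^(j))_{r s} (0 if out of range). *)
Definition entry (R : pzRingType) (n : nat -> nat)
    (A : forall j : nat, 'M[R]_(n j, n j.+1)) (j r s : nat) : R :=
  match (insub r : option 'I_(n j)), (insub s : option 'I_(n j.+1)) with
  | Some r', Some s' => A j r' s'
  | _, _ => 0
  end.

(* Signed digraph G: vertex V_j^r is encoded as the pair (j, r) (0-based r),
   with j < k and r < n j.  Edge V_j^r -> V_{j+1 mod k}^s iff (A^(j))_{rs} <> 0. *)
Definition is_vertex (k : nat) (n : nat -> nat) (v : nat * nat) : bool :=
  (v.1 < k)%N && (v.2 < n v.1)%N.

Definition gedge (R : pzRingType) (k : nat) (n : nat -> nat)
    (A : forall j : nat, 'M[R]_(n j, n j.+1)) (v w : nat * nat) : bool :=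
  [&& (v.1 < k)%N, w.1 == (v.1.+1 %% k)%N & entry A v.1 v.2 w.2 != 0].

(* A directed cycle: a nonempty list of pairwise distinct vertices c, with an
   edge from each vertex to the next one (cyclically).  Its edges are the
   pairs in zip c (rot 1 c). *)
Definition dcycle (R : pzRingType) (k : nat) (n : nat -> nat)
    (A : forall j : nat, 'M[R]_(n j, n j.+1)) (c : seq (nat * nat)) : Prop :=
  [/\ c != [::], uniq c, all (is_vertex k n) c &
      all (fun e => gedge k A e.1 e.2) (zip c (rot 1 c))].

Definition neg_edges (R : numDomainType) (n : nat -> nat)
    (A : forall j : nat, 'M[R]_(n j, n j.+1)) (c : seq (nat * nat)) : nat :=
  count (fun e : (nat * nat) * (nat * nat) => entry A e.1.1 e.1.2 e.2.2 < 0)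
        (zip c (rot 1 c)).

(* e-cycle: k*r1 edges, r2 negative, (-1)^(r1+r2) = 1 *)
Definition e_cycle (R : numDomainType) (k : nat) (n : nat -> nat)
    (A : forall j : nat, 'M[R]_(n j, n j.+1)) (c : seq (nat * nat)) : Prop :=
  dcycle k A c /\ (-1 : R) ^+ (size c %/ k + neg_edges A c) = 1.

Definition e_cycle_free (R : numDomainType) (k : nat) (n : nat -> nat)
    (A : forall j : nat, 'M[R]_(n j, n j.+1)) : Prop :=
  forall c, ~ e_cycle k A c.

Definition P0_matrix (R : numDomainType) (m : nat) (M : 'M[R]_m) : Prop :=
  forall S : {set 'I_m},
    0 <= \det (\matrix_(i < #|S|, j < #|S|) M (enum_val i) (enum_val j)).

(* Main.v *)
Require Import Defs.
From HB Require Import structures.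
From mathcomp Require Import all_boot all_order all_algebra perm.
Set Implicit Arguments. Unset Strict Implicit. Unset Printing Implicit Defensive.
Import Order.TTheory GRing.Theory Num.Theory.
Local Open Scope ring_scope.

Lemma det_cols (R : comNzRingType) (M : nat) (X : 'M[R]_M) :
  \det X = \sum_(s : {perm 'I_M}) (-1) ^+ s * \prod_l X (s l) l.
Proof.
rewrite -det_tr /determinant; apply: eq_bigr => s _; congr (_ * _).
by apply: eq_bigr => l _; rewrite mxE.
Qed.

Lemma det_expand (R : comNzRingType) (M p : nat) (C : 'I_M -> 'I_p -> R) (B : 'I_p -> 'I_M -> R) :
  \det (\matrix_(i, l) \sum_(z < p) C i z * B z l) =
  \sum_(f : {ffun 'I_M -> 'I_p}) \det (\matrix_(i, l) C i (f l)) * \prod_l B (f l) l.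
Proof.
rewrite det_cols.
transitivity (\sum_(f : {ffun 'I_M -> 'I_p}) \sum_(s : {perm 'I_M})
   (-1) ^+ s * (\prod_l C (s l) (f l)) * \prod_l B (f l) l).
  rewrite exchange_big /=; apply: eq_bigr => s _.
  under eq_bigr do rewrite !mxE.
  rewrite bigA_distr_bigA big_distrr /=; apply: eq_bigr => f _.
  by rewrite big_split /= mulrA.
apply: eq_bigr => f _; rewrite det_cols big_distrl /=.
by apply: eq_bigr => s _; congr (_ * _ * _); apply: eq_bigr => l _; rewrite !mxE.
Qed.

Lemma sign_prod_ge0 (R : realDomainType) (E : seq R) :
  0 <= (-1) ^+ (count (fun x => x < 0) E) * \prod_(x <- E) x.
Proof.
elim: E => [|a E IH] /=; first by rewrite big_nil mulr1.
rewrite big_cons exprD mulrACA; apply: mulr_ge0 => //.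
case: ltrP => /= Ha; first by rewrite expr1 mulN1r oppr_ge0 ltW.
by rewrite expr0 mul1r.
Qed.

Lemma rot1_mkseq (T : Type) (g : nat -> T) (n : nat) :
  g n = g 0%N -> rot 1 (mkseq g n) = mkseq (fun t => g t.+1) n.
Proof.
case: n => [|n] Hg //.
have E : forall (h : nat -> T) m, mkseq h m.+1 = h 0%N :: mkseq (fun t => h t.+1) m.
  move=> h m; rewrite /mkseq /= -(addn0 1%N) iotaDl -map_comp.
  by congr (_ :: _); apply: eq_map => t /=; rewrite add1n.
by rewrite E rot1_cons mkseqS Hg.
Qed.

Lemma zip_mkseq (S T : Type) (a : nat -> S) (b : nat -> T) n :
  zip (mkseq a n) (mkseq b n) = mkseq (fun t => (a t, b t)) n.
Proof. by rewrite /mkseq zip_map. Qed.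

Lemma big_traject (R : Type) (idx : R) (op : Monoid.law idx) (T : Type) (f : T -> T) x n (F : T -> R) :
  \big[op/idx]_(i <- traject f x n) F i = \big[op/idx]_(q < n) F (iter q f x).
Proof.
elim: n x => [|n IH] x; first by rewrite big_nil big_ord0.
rewrite trajectS big_cons IH big_ord_recl /=; congr (op _ _).
by apply: eq_bigr => q _ /=; rewrite -iterSr.
Qed.
Lemma entry_nz (R : pzRingType) (n : nat -> nat) (A : forall j : nat, 'M[R]_(n j, n j.+1)) j r s :
  entry A j r s != 0 -> (r < n j)%N && (s < n j.+1)%N.
Proof.
rewrite /entry; case: insubP => [r' Hr _|]; last by rewrite eqxx.
by case: insubP => [s' Hs _ _|]; [rewrite Hr Hs | rewrite eqxx].
Qed.

Lemma step_arith k t : (0 < k)%N ->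
  (t.+1 %% k = if ((t %% k).+1 < k)%N then (t %% k).+1 else 0)%N /\
  (t.+1 %/ k = if ((t %% k).+1 < k)%N then t %/ k else (t %/ k).+1)%N.
Proof.
move=> hk.
have -> : t.+1 = (t %/ k * k + (t %% k).+1)%N by rewrite addnS -divn_eq.
case: ifP => H.
  rewrite modnMDl modn_small //. split=>//. by rewrite divnMDl // (divn_small H) addn0.
have Ek : (t %% k).+1 = k.
  by apply/eqP; rewrite eqn_leq ltn_pmod // andTb leqNgt H.
rewrite Ek -mulSnr modnMl mulnK //.
Qed.

Lemma prod_split (R : comNzRingType) k L (F : nat -> nat -> R) : (0 < k)%N ->
  \prod_(t < L * k) F (t %% k)%N (t %/ k)%N = \prod_(q < L) \prod_(j < k) F j q.
Proof.
move=> hk; elim: L => [|L IH]; first by rewrite !big_ord0.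
rewrite big_ord_recr /= -IH mulSnr big_split_ord /=; congr (_ * _).
apply: eq_bigr => j _; rewrite modnMDl modn_small // divnMDl // divn_small //.
by rewrite addn0.
Qed.

Lemma orbit_ge0 (R : realFieldType) k n (A : forall j, 'M[R]_(n j, n j.+1))
  (hk0 : (0 < k)%N) (hfree : e_cycle_free k A)
  M (sg : {perm 'I_M}) (h : nat -> 'I_M -> nat)
  (hwrap : forall i, h k i = h 0%N (sg i))
  (hinj : forall j, (j < k)%N -> injective (h j)) (x : 'I_M) :
  0 <= (-1) ^+ (#|porbit sg x|.+1) *
       \prod_(i in porbit sg x) \prod_(j < k) entry A j (h j i) (h j.+1 i).
Proof.
set L := #|porbit sg x|.
set ent := fun (j : nat) (i : 'I_M) => entry A j (h j i) (h j.+1 i).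
have -> : \prod_(i in porbit sg x) \prod_(j < k) entry A j (h j i) (h j.+1 i) =
          \prod_(q < L) \prod_(j < k) ent j (iter q sg x).
  rewrite -(big_traject _ _ _ _ (fun i => \prod_(j < k) ent j i)).
  rewrite big_uniq ?uniq_traject_porbit //.
  by apply: eq_bigl => i; rewrite porbit_traject.
have L0 : (0 < L)%N by rewrite lt0n card_porbit_neq0.
case: (eqVneq (\prod_(q < L) \prod_(j < k) ent j (iter q sg x)) 0) => [->|Hnz].
  by rewrite mulr0.
have Hent : forall q j, (q < L)%N -> (j < k)%N -> ent j (iter q sg x) != 0.
  move=> q j hq hj; move/prodf_neq0: Hnz => /(_ (Ordinal hq) isT).
  by move/prodf_neq0 => /(_ (Ordinal hj) isT).
have gS1 : forall t, (t.+1 %% k = (t %% k).+1 %% k)%N.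
  move=> t; have [E1 _] := step_arith t hk0; rewrite E1.
  case: ifP => H; first by rewrite (modn_small H).
  have Ek : (t %% k).+1 = k.
    by apply/eqP; rewrite eqn_leq ltn_pmod // andTb leqNgt H.
  by rewrite Ek modnn.
have gS2 : forall t, h (t.+1 %% k)%N (iter (t.+1 %/ k) sg x) =
                     h (t %% k).+1 (iter (t %/ k) sg x).
  move=> t; have [E1 E2] := step_arith t hk0; rewrite E1 E2.
  case: ifP => H //.
  have Ek : (t %% k).+1 = k.
    by apply/eqP; rewrite eqn_leq ltn_pmod // andTb leqNgt H.
  by rewrite Ek hwrap iterS.
pose g t := ((t %% k)%N, h (t %% k)%N (iter (t %/ k) sg x)).
have gN : g (L * k)%N = g 0%N.
  by rewrite /g modnMl mulnK // iter_porbit mod0n div0n.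
set N := (L * k)%N.
set c := mkseq g N.
have Hzip : zip c (rot 1 c) = mkseq (fun t => (g t, g t.+1)) N.
  by rewrite rot1_mkseq // zip_mkseq.
have Hlt : forall t, (t < N)%N -> (t %/ k < L)%N by move=> t; rewrite ltn_divLR.
have Hdc : dcycle k A c.
  split.
  - by rewrite -size_eq0 size_mkseq muln_eq0 negb_or -!lt0n L0 hk0.
  - rewrite /c /mkseq map_inj_in_uniq ?iota_uniq // => t t'.
    rewrite !mem_iota !add0n => ht ht' [E1 E2].
    have hq := Hlt _ ht; have hq' := Hlt _ ht'.
    rewrite E1 in E2; move/(hinj _ (ltn_pmod t' hk0)): E2 => E2.
    have Eq : (t %/ k = t' %/ k)%N.
      have U := uniq_traject_porbit sg x.
      by apply/eqP; rewrite -(nth_uniq x _ _ U) ?size_traject // !nth_traject // E2.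
    by rewrite (divn_eq t k) (divn_eq t' k) Eq E1.
  - rewrite /c /mkseq all_map; apply/allP => t; rewrite mem_iota add0n => ht /=.
    rewrite /is_vertex /= ltn_pmod //=.
    by have /andP[] := entry_nz (Hent _ _ (Hlt _ ht) (ltn_pmod t hk0)).
  - rewrite Hzip /mkseq all_map; apply/allP => t; rewrite mem_iota add0n => ht /=.
    rewrite /gedge /= ltn_pmod // gS2 gS1 eqxx /=.
    exact: (Hent _ _ (Hlt _ ht) (ltn_pmod t hk0)).
have Hne := hfree c; rewrite /e_cycle in Hne.
have Hs : (-1 : R) ^+ (size c %/ k + neg_edges A c) != 1.
  by apply/eqP => E; apply: Hne.
rewrite size_mkseq mulnK // in Hs.
set E := map (fun e : (nat * nat) * (nat * nat) => entry A e.1.1 e.1.2 e.2.2) (zip c (rot 1 c)).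
have En : neg_edges A c = count (fun y => y < 0) E by rewrite count_map.
have HP : \prod_(y <- E) y = \prod_(q < L) \prod_(j < k) ent j (iter q sg x).
  have Hi : iota 0 N = index_iota 0 N by rewrite /index_iota subn0.
  rewrite big_map Hzip /mkseq big_map Hi big_mkord -(@prod_split _ k L (fun j q => ent j (iter q sg x)) hk0).
  by apply: eq_bigr => t _ /=; rewrite gS2.
have := sign_prod_ge0 E; rewrite HP -En.
move: Hs; set P := \prod_(q < L) _.
rewrite exprD exprS -(signr_odd _ L) -(signr_odd _ (neg_edges A c)).
case: (odd L); case: (odd _) => /=; rewrite ?expr0 ?expr1 ?mulN1r ?mul1r ?opprK ?mulrN1 //.
all: try by rewrite eqxx.
by move=> _ HP0; rewrite mul1r.
Qed.

Lemma core (R : realFieldType) k n (A : forall j, 'M[R]_(n j, n j.+1))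
  (hk0 : (0 < k)%N) (hfree : e_cycle_free k A)
  M (sg : {perm 'I_M}) (h : nat -> 'I_M -> nat)
  (hwrap : forall i, h k i = h 0%N (sg i))
  (hinj : forall j, (j < k)%N -> injective (h j)) :
  0 <= (-1) ^+ sg * \prod_i \prod_(j < k) entry A j (h j i) (h j.+1 i).
Proof.
set w := fun i => \prod_(j < k) entry A j (h j i) (h j.+1 i).
rewrite (partition_big_imset (porbit sg) 'I_M) -/(porbits sg) /=.
have Hc : #|'I_M| = (\sum_(O in porbits sg) #|[pred i | porbit sg i == O]|)%N.
  rewrite -sum1_card (partition_big_imset (porbit sg) 'I_M) -/(porbits sg) /=.
  by apply: eq_bigr => O _; rewrite sum1_card.
have Hs : (-1 : R) ^+ sg =
   \prod_(O in porbits sg) (-1) ^+ (#|[pred i | porbit sg i == O]| + 1)%N.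
  rewrite /odd_perm -oddD signr_odd Hc -[#|porbits sg|]sum1_card -big_split /=.
  by rewrite (big_morph (fun m : nat => (-1 : R) ^+ m) (exprD (-1)) (expr0 (-1))).
rewrite Hs -big_split /=; apply: prodr_ge0 => O /imsetP [x _ ->].
have E : forall i, (porbit sg i == porbit sg x) = (i \in porbit sg x).
  by move=> i; rewrite eq_porbit_mem.
have -> : #|[pred i | porbit sg i == porbit sg x]| = #|porbit sg x|.
  by apply: eq_card => i; rewrite inE /= E.
rewrite addn1.
have -> : \prod_(i in 'I_M | porbit sg i == porbit sg x) w i = \prod_(i in porbit sg x) w i.
  by apply: eq_bigl => i; rewrite E.
exact: orbit_ge0.
Qed.
Definition chainN (R : pzRingType) (n : nat -> nat)
    (A : forall j : nat, 'M[R]_(n j, n j.+1)) (m : nat) (x y : nat) : R :=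
  match (insub x : option 'I_(n 0%N)), (insub y : option 'I_(n m)) with
  | Some x', Some y' => chain_prod A m x' y'
  | _, _ => 0
  end.

Lemma entry_val (R : pzRingType) (n : nat -> nat)
    (A : forall j : nat, 'M[R]_(n j, n j.+1)) j (z : 'I_(n j)) y :
  entry A j z y = match (insub y : option 'I_(n j.+1)) with Some y' => A j z y' | None => 0 end.
Proof. by rewrite /entry valK. Qed.

Lemma chainN_S (R : comNzRingType) (n : nat -> nat)
    (A : forall j : nat, 'M[R]_(n j, n j.+1)) m x y :
  chainN A m.+1 x y = \sum_(z < n m) chainN A m x z * entry A m z y.
Proof.
rewrite /chainN; case: insubP => [x' _ _|_]; last by rewrite big1 // => z _ /=; rewrite mul0r.
under eq_bigr do rewrite valK entry_val.
case: insubP => [y' _ _|_]; last by rewrite big1 // => z _; rewrite mulr0.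
by rewrite /= mxE.
Qed.

Lemma chainN_1 (R : comNzRingType) (n : nat -> nat)
    (A : forall j : nat, 'M[R]_(n j, n j.+1)) x y :
  chainN A 1 x y = entry A 0 x y.
Proof.
rewrite /chainN /entry; case: insubP => [x' _ _|_] //.
by case: insubP => [y' _ _|_] //=; rewrite mul1mx.
Qed.

Definition Qd (R : comNzRingType) (n : nat -> nat)
    (A : forall j : nat, 'M[R]_(n j, n j.+1)) M (s : 'I_M -> nat) m (g : 'I_M -> nat) : R :=
  \det (\matrix_(i, l) chainN A m (s i) (g l)).

Lemma Qd_S (R : comNzRingType) (n : nat -> nat)
    (A : forall j : nat, 'M[R]_(n j, n j.+1)) M (s : 'I_M -> nat) m g :
  Qd A s m.+1 g = \sum_(f : {ffun 'I_M -> 'I_(n m)})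
     Qd A s m (fun l => val (f l)) * \prod_l entry A m (f l) (g l).
Proof.
rewrite /Qd (@eq_mx _ _ _ _ _ (fun i l => \sum_(z < n m) chainN A m (s i) z * entry A m z (g l))).
  by rewrite det_expand.
by move=> i l; rewrite chainN_S.
Qed.

Lemma Qd_noninj (R : comNzRingType) (n : nat -> nat)
    (A : forall j : nat, 'M[R]_(n j, n j.+1)) M (s : 'I_M -> nat) m (g : 'I_M -> nat) l1 l2 :
  l1 != l2 -> g l1 = g l2 -> Qd A s m g = 0.
Proof.
move=> Hne Heq; rewrite /Qd -det_tr (determinant_alternate Hne) //.
by move=> i; rewrite !mxE Heq.
Qed.

Lemma Qd_pos (R : realFieldType) k n (A : forall j, 'M[R]_(n j, n j.+1))
  (hk0 : (0 < k)%N) (hfree : e_cycle_free k A)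
  M (s : 'I_M -> nat) (sinj : injective s) :
  forall m, (0 < m)%N -> (m <= k)%N -> forall h : nat -> 'I_M -> nat,
  (forall i, h k i = s i) ->
  (forall j, (m <= j < k)%N -> injective (h j)) ->
  0 <= Qd A s m (h m) * \prod_(m <= j < k) \prod_l entry A j (h j l) (h j.+1 l).
Proof.
elim=> [//|m IH] _ Hmk h hk hinj.
case: m IH Hmk hinj => [|m] IH Hmk hinj.
-
  rewrite /Qd /determinant big_distrl /=; apply: sumr_ge0 => sg _.
  pose h' j i := if j == 0%N then s i else h j (sg i).
  have := core hk0 hfree (sg := sg) (h := h') _ _.
  have Hk0 : (k == 0%N) = false by rewrite eqn0Ngt hk0.
  have E : \prod_i \prod_(j < k) entry A j (h' j i) (h' j.+1 i) =
     \prod_i chainN A 1 (s i) (h 1%N (sg i)) *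
     \prod_(1 <= j < k) \prod_l entry A j (h j l) (h j.+1 l).
    rewrite exchange_big /= -(big_mkord xpredT (fun j => \prod_i entry A j (h' j i) (h' j.+1 i))).
    rewrite big_ltn //; congr (_ * _).
      by apply: eq_bigr => i _; rewrite chainN_1.
    apply: eq_big_nat => j /andP [Hj _].
    rewrite [RHS](reindex_inj (@perm_inj _ sg)) /=; apply: eq_bigr => i _.
    by rewrite /h' /= eqn0Ngt Hj.
  rewrite E => H; under eq_bigr do rewrite mxE; rewrite -mulrA; apply: H.
    by move=> i; rewrite /h' Hk0 /= hk.
  move=> j Hj; rewrite /h'; case: eqP => Hj0; first exact: sinj.
  have Hj' : (1 <= j < k)%N by rewrite Hj andbT lt0n; apply/eqP.
  by move=> x y /(hinj j Hj') /perm_inj.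
-
  rewrite Qd_S big_distrl /=; apply: sumr_ge0 => f _.
  case: (boolP (injectiveb f)) => [/injectiveP finj|/injectivePn [l1 [l2 Hne Heq]]]; last first.
    by rewrite (@Qd_noninj _ _ A M s m.+1 (fun l => val (f l)) l1 l2 Hne) ?mul0r //= Heq.
  pose h'' j := if j == m.+1 then (fun l => val (f l)) else h j.
  have Hmk' : (m.+1 < k)%N by [].
  have := IH isT (ltnW Hmk') h''.
  have Hkm : (k == m.+1) = false by rewrite gtn_eqF.
  have E1 : h'' m.+1 = (fun l => val (f l)) by rewrite /h'' eqxx.
  have E2 : h'' m.+2 = h m.+2 by rewrite /h'' (gtn_eqF (ltnSn m.+1)).
  rewrite big_ltn // E1 E2 -mulrA.
  have -> : \prod_(m.+2 <= j < k) \prod_l entry A j (h'' j l) (h'' j.+1 l) =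
            \prod_(m.+2 <= j < k) \prod_l entry A j (h j l) (h j.+1 l).
    apply: eq_big_nat => j /andP [Hj _]; rewrite /h'' gtn_eqF // gtn_eqF //.
    exact: ltnW.
  apply.
    by move=> i; rewrite /h'' Hkm hk.
  move=> j /andP [Hj1 Hj2]; rewrite /h''; case: eqP => [_|Hne].
    by move=> x y /val_inj /finj.
  apply: hinj; rewrite Hj2 andbT ltn_neqAle Hj1 andbT eq_sym; exact/eqP.
Qed.

Unset Implicit Arguments.
Set Strict Implicit.

Theorem theorem1 (R : realFieldType) (k : nat) (n : nat -> nat)
    (hk0 : (0 < k)%N) (hn : forall j, (j < k)%N -> (0 < n j)%N) (hk : n k = n 0%N)
    (A : forall j : nat, 'M[R]_(n j, n j.+1)) :
  e_cycle_free k A -> P0_matrix (cyc_prod A hk).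
Proof.
move=> hfree S.
pose s (i : 'I_#|S|) := val (enum_val i).
have sinj : injective s by move=> i j /val_inj /enum_val_inj.
have := @Qd_pos R k n A hk0 hfree #|S| s sinj k hk0 (leqnn k) (fun _ => s)
  (fun i => erefl).
rewrite big_geq // mulr1 /Qd.
have -> : (\matrix_(i, j) cyc_prod A hk (enum_val i) (enum_val j)) =
          \matrix_(i, l) chainN A k (s i) (s l).
  apply/matrixP => i j; rewrite !mxE /cyc_prod castmxE /chainN /s valK.
  case: insubP => [y _ Ey|Hn]; first by congr (chain_prod A k _ _); apply: val_inj => /=; rewrite ?Ey.
  by rewrite /= hk ltn_ord in Hn.
apply=> j /andP [H1 H2]; by rewrite ltnNge H1 in H2.
Qed.
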